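(* Let $k\ge1$ and $a_1,\dots,a_k\in\mathbb{F}_q$, and set $(b_1,\dots,b_k):=F(a_1,\dots,a_k)$. Then, as permutations of $\mathbb{P}^1(\mathbb{F}_q)$, $$x^{q-2}\circ(x-a_k)\circ x^{q-2}\circ(x-a_{k-1})\circ\cdots\circ x^{q-2}\circ(x-a_1)=\nu(x)\circ(b_1,\infty)\circ(b_2,\infty)\circ\cdots\circ(b_k,\infty),$$ where $\nu(x):=x^{-1}\circ(x-a_k)\circ x^{-1}\circ(x-a_{k-1})\circ\cdots\circ x^{-1}\circ(x-a_1)$, which is a degree-one rational function in $\mathbb{F}_q(x)$.
   Context: Let $q>2$ be a prime power, $\mathbb{F}_q$ the field with $q$ elements, $\mathbb{P}^1(\mathbb{F}_q)=\mathbb{F}_q\cup\{\infty\}$. Degree-one rational functions in $\mathbb{F}_q(x)$ act on $\mathbb{P}^1(\mathbb{F}_q)$ with the usual conventions (e.g. $x^{-1}$ swaps $0$ and $\infty$, polynomials fix $\infty$). $x^{q-2}$ acts on $\mathbb{P}^1(\mathbb{F}_q)$ by fixing $0$ and $\infty$ and sending $c\in\mathbb{F}_q^*$ to $c^{q-2}=c^{-1}$; for $c\in\mathbb{F}_q$, $c^{q-2}$ also denotes the field element ($0^{q-2}=0$). For $b\in\mathbb{F}_q$, $(b,\infty)$ is the transposition swapping $b$ and $\infty$. Composition is $(f\circ g)(x)=f(g(x))$. The map $F:\mathbb{F}_q^k\to\mathbb{F}_q^k$ sends $(a_1,\dots,a_k)$ to $(b_1,\dots,b_k)$ where $b_i:=c_{i,i}$,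 and for each $1\le i\le k$ the elements $c_{i,j}$ ($0\le j\le i$) are defined by $c_{i,0}:=0$ and $c_{i,j}:=c_{i,j-1}^{q-2}+a_{i-j+1}$. *)

(* Defs.v *)
(* P^1(F_q) is modelled as [option F]: [None] = infinity. *)
From mathcomp Require Import all_boot all_order all_algebra all_field.
Set Implicit Arguments. Unset Strict Implicit. Unset Printing Implicit Defensive.
Import GRing.Theory.
Local Open Scope ring_scope.

Section P1.
Variable F : finFieldType.

Definition P1 := option F.

Definition qF : nat := #|F|.

Definition powq2 (c : F) : F := c ^+ (qF - 2).

Definition act_powq2 (p : P1) : P1 :=
  match p with None => None | Some c => Some (powq2 c) end.

Definition act_sub (a : F) (p : P1) : P1 :=
  match p with None => None | Some c => Some (c - a) end.

Definition act_inv (p : P1) : P1 :=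
  match p with
  | None => Some 0
  | Some c => if c == 0 then None else Some c^-1
  end.

Definition transp_inf (b : F) (p : P1) : P1 :=
  match p with
  | None => Some b
  | Some c => if c == b then None else Some c
  end.

(* x^(q-2) o (x - a_k) o ... o x^(q-2) o (x - a_1), for a = [:: a_1; ...; a_k] *)
Definition lhs_map (a : seq F) : P1 -> P1 :=
  foldl (fun g ai => act_powq2 \o act_sub ai \o g) id a.

(* nu(x) = x^-1 o (x - a_k) o ... o x^-1 o (x - a_1) acting on P^1 *)
Definition nu_map (a : seq F) : P1 -> P1 :=
  foldl (fun g ai => act_inv \o act_sub ai \o g) id a.

(* (b_1, inf) o (b_2, inf) o ... o (b_k, inf) for b = [:: b_1; ...; b_k] *)
Definition transp_prod (b : seq F) : P1 -> P1 :=
  foldr (fun bi g => transp_inf bi \o g) id b.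

(* a_i (1-indexed) for a = [:: a_1; ...; a_k] *)
Definition aidx (a : seq F) (i : nat) : F := nth 0 a i.-1.

Fixpoint cij (a : seq F) (i j : nat) : F :=
  match j with
  | 0 => 0
  | j'.+1 => powq2 (cij a i j') + aidx a (i - j)%N.+1
  end.

Definition Fmap (a : seq F) : seq F := [seq cij a i i | i <- iota 1 (size a)].

End P1.

(* Main.v *)
Require Import Defs.
From mathcomp Require Import all_boot all_order all_algebra all_field.
From mathcomp Require Import zify.
Set Implicit Arguments. Unset Strict Implicit. Unset Printing Implicit Defensive.
Import GRing.Theory.
Local Open Scope ring_scope.

Section Aux.
Variable F : finFieldType.
Hypothesis hq : (2 < #|F|)%N.

Lemma powq2E (c : F) : powq2 c = c^-1.
Proof.
rewrite /powq2 /qF; case: (eqVneq c 0) => [->|nz].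
  by rewrite invr0 expr0n; case: eqP => //; lia.
apply: (mulIf nz); rewrite mulVf // -exprSr.
have e : (#|F| - 2).+1 = (#|F|.-1)%N by lia.
rewrite e; apply: (mulIf nz); rewrite mul1r -exprSr prednK ?expf_card //; lia.
Qed.

Definition fL := fun (g : P1 F -> P1 F) (ai : F) => @act_powq2 F \o @act_sub F ai \o g.

Lemma foldl_L s (g : P1 F -> P1 F) : foldl fL g s =1 foldl fL id s \o g.
Proof.
elim: s g => [|b s IH] g y //=.
by rewrite (IH (fL g b)) (IH (fL id b)).
Qed.

Definition hfun (s : seq F) (x : F) : F := foldr (fun a c => powq2 c + a) x s.

Lemma cij_cons a1 (s : seq F) i j : (j < i)%N -> cij (a1::s) i j = cij s i.-1 j.
Proof.
case: i => // i.
elim: j => [|j IH] lt //=.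
rewrite IH ?(ltnW lt) //; congr (_ + _); rewrite /aidx /=.
rewrite subSS -subnSK //.
Qed.

Lemma cij_rcons_h (s : seq F) (x : F) : cij (rcons s x) (size s).+1 (size s).+1 = hfun s x.
Proof.
elim: s => [|b s IH].
  by rewrite /= powq2E invr0 add0r.
have eq t i : cij t i.+1 i.+1 = powq2 (cij t i.+1 i) + aidx t 1.
  by rewrite /= subnn.
rewrite rcons_cons eq cij_cons //; by rewrite [_.-1]/= IH.
Qed.

Lemma L_h (s : seq F) (x : F) : lhs_map s (Some (hfun s x)) = Some x.
Proof.
elim: s => [|b s IH] //=.
rewrite /lhs_map /= -/fL foldl_L /= addrK !powq2E invrK.
exact: IH.
Qed.

Lemma lhs_rcons (s : seq F) (x : F) : lhs_map (rcons s x) =1 @act_powq2 F \o act_sub x \o lhs_map s.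
Proof. by move=> y; rewrite /lhs_map foldl_rcons. Qed.

Lemma nu_rcons (s : seq F) (x : F) : nu_map (rcons s x) =1 @act_inv F \o act_sub x \o nu_map s.
Proof. by move=> y; rewrite /nu_map foldl_rcons. Qed.

Lemma cij_rcons (s : seq F) (x : F) i j : (j <= i)%N -> (i <= size s)%N ->
  cij (rcons s x) i j = cij s i j.
Proof.
move=> + hi; elim: j => [|j IH] lt //=.
rewrite IH ?(ltnW lt) //; congr (_ + _); rewrite /aidx /= nth_rcons.
have -> : (i - j.+1 < size s)%N by lia.
done.
Qed.

Lemma Fmap_rcons (s : seq F) (x : F) : Fmap (rcons s x) = rcons (Fmap s) (hfun s x).
Proof.
rewrite /Fmap size_rcons -[(size s).+1]addn1 iotaD map_cat -[RHS]cats1.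
congr (_ ++ _); last exact: (congr1 (fun y => [:: y]) (cij_rcons_h s x)).
apply/eq_in_map => i; rewrite mem_iota => /andP [h1 h2].
apply: cij_rcons => //; lia.
Qed.

Definition fT := fun (bi : F) (g : P1 F -> P1 F) => @transp_inf F bi \o g.

Lemma foldr_T B (z : P1 F -> P1 F) : foldr fT z B =1 foldr fT id B \o z.
Proof. by elim: B => [|b B IH] y //=; rewrite /fT /= IH. Qed.

Lemma transp_rcons (B : seq F) (b : F) : transp_prod (rcons B b) =1 transp_prod B \o transp_inf b.
Proof. by move=> y; rewrite /transp_prod foldr_rcons -/fT foldr_T. Qed.

Lemma lhs_None (s : seq F) : lhs_map s None = None.
Proof. by elim/last_ind: s => // s x IH; rewrite lhs_rcons /= IH. Qed.

Lemma lhs_inj (s : seq F) : injective (lhs_map s).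
Proof.
elim/last_ind: s => [|s x IH] y z //.
have inj1 : injective (@act_powq2 F \o act_sub x).
  move=> [u|] [v|] //= [] ; rewrite !powq2E => /invr_inj /subIr -> //.
by rewrite !lhs_rcons /= => /inj1 /IH.
Qed.

Lemma main (a : seq F) : lhs_map a =1 nu_map a \o transp_prod (Fmap a).
Proof.
elim/last_ind: a => [|s x IH] y; first by rewrite /Fmap.
rewrite /= lhs_rcons nu_rcons /= Fmap_rcons transp_rcons /=.
have := IH (transp_inf (hfun s x) y) => /= <-.
case: y => [c|]; last by rewrite /= L_h lhs_None /= subrr eqxx.
case: (eqVneq c (hfun s x)) => [->|ne].
  by rewrite /= eqxx L_h lhs_None /= subrr powq2E invr0.
rewrite /= (negbTE ne).
case E: (lhs_map s (Some c)) => [d|]; last first.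
  have : lhs_map s (Some c) = lhs_map s None by rewrite E lhs_None.
  by move/lhs_inj.
have dx : d != x.
  apply/eqP => dE; move: E; rewrite dE -(L_h s x) => /lhs_inj [] /eqP.
  by rewrite (negbTE ne).
by rewrite /= subr_eq0 (negbTE dx) powq2E.
Qed.

End Aux.

Theorem theorem3p2 (F : finFieldType) (a : seq F) :
  (2 < #|F|)%N -> (1 <= size a)%N ->
  lhs_map a =1 nu_map a \o transp_prod (Fmap a).
Proof. by move=> hq _; exact: main. Qed.
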